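(* Fix $j$ with $\ell+1\le j\le n$, a nonzero linear form $\alpha_j=\sum_{i=1}^{\ell}a_{ji}x_i\in S=\mathbb{K}[x_1,\dots,x_\ell]$. Let $M_j\subseteq S^\ell$ be the $S$-module of all tuples $(k_1,\dots,k_\ell)\in S^\ell$ for which there exists $k_j\in S$ with $$k_j\,\alpha_j=\sum_{i=1}^{\ell}k_i\,a_{ji}x_i .$$ Then $M_j$ is generated as an $S$-module by the set $$G_j=\{e\}\cup\{e_r : a_{jr}=0\}\cup\{a_{jt}x_t\,e_s-a_{js}x_s\,e_t : a_{jt}a_{js}\neq 0\},$$ where $e=(1,1,\dots,1)$ and $e_r$ is the $r$-th standard basis vector of $S^\ell$.
   Context: This is the $j$-th equation of the system $k_j\alpha_j=\sum_{i=1}^\ell k_i(a_{ji}x_i)$, $\ell+1\le j\le n$, arising (via Theorem 2.1 / Corollary 2.2 of the paper) for an arrangement with canonical defining polynomial $Q=x_1\cdots x_\ell\,\alpha_{\ell+1}\cdots\alpha_n$, where $\theta(x_i)=k_ix_i$ and $\theta(\alpha_j)=k_j\alpha_j$ for a logarithmic derivation $\theta$. *)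

(* Defs.v *)
From HB Require Import structures.
From mathcomp Require Import all_boot all_order all_algebra.
Set Implicit Arguments. Unset Strict Implicit. Unset Printing Implicit Defensive.
Import Order.TTheory GRing.Theory Num.Theory.
Local Open Scope ring_scope.

(* S = K[x_0, ..., x_(n-1)], built as iterated univariate polynomial rings:
   K[x_0,...,x_(n-1)] = (K[x_0,...,x_(n-2)])[x_(n-1)]. *)
Fixpoint mpoly (K : fieldType) (n : nat) : idomainType :=
  match n with
  | 0 => K
  | n'.+1 => {poly mpoly K n'}
  end.

(* the variable x_i of mpoly K n (0 when i >= n) *)
Fixpoint mX (K : fieldType) (n : nat) (i : nat) : mpoly K n :=
  match n return mpoly K n with
  | 0 => 0
  | n'.+1 => if i == n' then 'X else (mX K n' i)%:P
  end.

Fixpoint mC (K : fieldType) (n : nat) (c : K) : mpoly K n :=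
  match n return mpoly K n with
  | 0 => c
  | n'.+1 => (mC n' c)%:P
  end.

Definition lin_form (K : fieldType) (l : nat) (a : 'I_l -> K) : mpoly K l :=
  \sum_(i < l) mC l (a i) * mX K l i.

Definition in_Mj (K : fieldType) (l : nat) (a : 'I_l -> K)
  (k : 'rV[mpoly K l]_l) : Prop :=
  exists kj : mpoly K l,
    kj * lin_form a = \sum_(i < l) k 0 i * (mC l (a i) * mX K l i).

Definition e_all (K : fieldType) (l : nat) : 'rV[mpoly K l]_l := const_mx 1.
Definition e_std (K : fieldType) (l : nat) (r : 'I_l) : 'rV[mpoly K l]_l :=
  delta_mx 0 r.

Definition g_pair (K : fieldType) (l : nat) (a : 'I_l -> K) (s t : 'I_l)
  : 'rV[mpoly K l]_l :=
  (mC l (a t) * mX K l t) *: e_std K s - (mC l (a s) * mX K l s) *: e_std K t.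

Definition in_span_Gj (K : fieldType) (l : nat) (a : 'I_l -> K)
  (k : 'rV[mpoly K l]_l) : Prop :=
  exists (c0 : mpoly K l) (c1 : 'I_l -> mpoly K l) (c2 : 'I_l -> 'I_l -> mpoly K l),
    k = c0 *: e_all K l
        + \sum_(r < l | a r == 0) c1 r *: e_std K r
        + \sum_(s < l) \sum_(t < l | (a t * a s != 0)) c2 s t *: g_pair a s t.

(* Main.v *)
Require Import Defs.
From HB Require Import structures.
From mathcomp Require Import all_boot all_order all_algebra.
Import GRing.Theory.
Local Open Scope ring_scope.

Section Core.
Variable K : fieldType.

Lemma mC0 n : mC n (0 : K) = 0.
Proof. by elim: n => //= n ->. Qed.
Lemma mC1 n : mC n (1 : K) = 1.
Proof. by elim: n => //= n ->. Qed.
Lemma mCM n (x y : K) : mC n (x * y) = mC n x * mC n y.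
Proof. by elim: n => //= n ->; rewrite polyCM. Qed.
Lemma mC_eq0 n (x : K) : (mC n x == 0) = (x == 0).
Proof. by elim: n => //= n <-; rewrite polyC_eq0. Qed.

Definition yv n (c : nat -> K) (i : nat) : mpoly K n := mC n (c i) * mX K n i.
Definition syz n m c (f : nat -> mpoly K n) := \sum_(i < m) f i * yv n c i = 0.
Definition gpv n c (s t : nat) (i : nat) : mpoly K n :=
  (if i == s then yv n c t else 0) - (if i == t then yv n c s else 0).

Inductive spanP n m c : (nat -> mpoly K n) -> Prop :=
| sp0 : spanP n m c (fun _ => 0)
| spD f g : spanP n m c f -> spanP n m c g -> spanP n m c (fun i => f i + g i)
| spZ h f : spanP n m c f -> spanP n m c (fun i => h * f i)
| spE r : (r < m)%N -> c r = 0 -> spanP n m c (fun i => if i == r then 1 else 0)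
| spG s t : (s < m)%N -> (t < m)%N -> spanP n m c (gpv n c s t)
| spX f g : spanP n m c f -> (forall i, (i < m)%N -> f i = g i) -> spanP n m c g.
Arguments sp0 {n m c}.
Arguments spD {n m c f g}.
Arguments spZ {n m c} h {f}.
Arguments spE {n m c} r.
Arguments spG {n m c} s t.
Arguments spX {n m c f g}.

Lemma sum_if N n (i : nat) (F : nat -> mpoly K N) : (i < n)%N ->
  \sum_(j < n) (if i == j then F j else 0) = F i.
Proof.
elim: n i F => // n IH i F lt; rewrite big_ord_recr /=.
rewrite ltnS leq_eqVlt in lt; case/orP: lt => [/eqP->|lin].
  2: by rewrite IH // (ltn_eqF lin) addr0.
rewrite eqxx big1 ?add0r // => j _; by rewrite (gtn_eqF (ltn_ord j)).
Qed.

Lemma spanP_syz n m c f : spanP n m c f -> syz n m c f.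
Proof.
rewrite /syz; elim => {f}.
- by rewrite big1 // => i _; rewrite mul0r.
- move=> f g _ Hf _ Hg.
  rewrite (eq_bigr (fun i : 'I_m => f i * yv n c i + g i * yv n c i)).
    by rewrite big_split /= Hf Hg addr0.
  by move=> i _; rewrite mulrDl.
- move=> h f _ Hf.
  rewrite (eq_bigr (fun i : 'I_m => h * (f i * yv n c i))).
    by rewrite -mulr_sumr Hf mulr0.
  by move=> i _; rewrite mulrA.
- move=> r rm cr; rewrite (eq_bigr (fun j : 'I_m => if (r == j) then yv n c r else 0)).
    by rewrite (sum_if _ _ _ (fun _ => yv n c r)) // /yv cr mC0 mul0r.
  by move=> j _; rewrite eq_sym; case: eqP => [->|]; rewrite ?mul1r ?mul0r.
- move=> s t sm tm; rewrite /gpv.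
  rewrite (eq_bigr (fun j : 'I_m => (if s == j then yv n c t * yv n c s else 0)
     - (if t == j then yv n c s * yv n c t else 0))).
    by rewrite sumrB (sum_if _ _ _ (fun _ => yv n c t * yv n c s)) // (sum_if _ _ _ (fun _ => yv n c s * yv n c t)) // mulrC subrr.
  by move=> j _; rewrite mulrBl; congr (_ - _); rewrite eq_sym; case: eqP => [->|]; rewrite ?mul0r.
- move=> f g _ Hf fg; rewrite -[RHS]Hf; apply: eq_bigr => i _; by rewrite fg.
Qed.

Lemma yvS n c i : (i < n)%N -> yv n.+1 c i = (yv n c i)%:P.
Proof. by move=> lt; rewrite /yv /= (ltn_eqF lt) polyCM. Qed.
Lemma yvSn n c : yv n.+1 c n = (mC n (c n))%:P * 'X.
Proof. by rewrite /yv /= eqxx. Qed.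

Lemma spanP_sum n m c k (F : nat -> nat -> mpoly K n) :
  (forall j, (j < k)%N -> spanP n m c (F j)) ->
  spanP n m c (fun i => \sum_(j < k) F j i).
Proof.
elim: k => [|k IH] H.
  by apply: spX sp0 _ => i _; rewrite big_ord0.
apply: spX (spD (IH _) (H k _)) _ => // [j jk|i _].
  by apply: H; apply: ltnW.
by rewrite big_ord_recr.
Qed.

Lemma spanP_lift n m c (f : nat -> mpoly K n) : (m <= n)%N ->
  spanP n m c f -> spanP n.+1 m c (fun i => ((f i)%:P : {poly mpoly K n})).
Proof.
move=> mn; elim => {f}.
- by apply: spX sp0 _ => i _.
- by move=> f g _ Hf _ Hg; apply: spX (spD Hf Hg) _ => i _; rewrite polyCD.
- move=> h f _ Hf; apply: spX (spZ (h%:P : mpoly K n.+1) Hf) _ => i _; by rewrite polyCM.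
- move=> r rm cr; apply: spX (spE _ rm cr) _ => i _.
  by case: (i == r).
- move=> s t sm tm; apply: spX (spG _ _ sm tm) _ => i _.
  rewrite /gpv !yvS; try exact: leq_trans mn.
  by rewrite polyCB; case: (i == s); case: (i == t); rewrite ?polyC0.
- by move=> f g _ Hf fg; apply: spX Hf _ => i im; rewrite fg.
Qed.

Lemma spanP_widen n m m' c (f : nat -> mpoly K n) : (m <= m')%N ->
  spanP n m c f -> spanP n m' c (fun i => if (i < m)%N then f i else 0).
Proof.
move=> mm; elim => {f}.
- by apply: spX sp0 _ => i _; case: ifP.
- by move=> f g _ Hf _ Hg; apply: spX (spD Hf Hg) _ => i _; case: ifP; rewrite ?addr0.
- by move=> h f _ Hf; apply: spX (spZ h Hf) _ => i _; case: ifP; rewrite ?mulr0.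
- move=> r rm cr; apply: spX (spE _ (leq_trans rm mm) cr) _ => i _.
  case im: (i < m)%N => //; case: (i =P r) => [ir|//]; by move: im; rewrite ir rm.
- move=> s t sm tm; apply: spX (spG _ _ (leq_trans sm mm) (leq_trans tm mm)) _ => i _.
  case: ifP => // im; rewrite /gpv.
  case: (i =P s) => [ei|_]; first by move: im; rewrite ei sm.
  case: (i =P t) => [ei|_]; first by move: im; rewrite ei tm.
  by rewrite subr0.
- move=> f g _ Hf fg; apply: spX Hf _ => i _; case: ifP => // im; exact: fg.
Qed.

Lemma take1 (R : nzRingType) (p : {poly R}) : take_poly 1 p = (p`_0)%:P.
Proof.
apply/polyP => k; rewrite coef_take_poly coefC; by case: k.
Qed.

Lemma coef_syz n m c k (f : nat -> {poly mpoly K n}) : (m <= n)%N ->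
  (\sum_(i < m) f i * yv n.+1 c i)`_k = \sum_(i < m) (f i)`_k * yv n c i.
Proof.
move=> mn; rewrite coef_sum; apply: eq_bigr => i _.
by rewrite yvS ?coefMC //; apply: leq_trans mn.
Qed.


Lemma syz_coefs n m c (f : nat -> {poly mpoly K n}) : (m <= n)%N ->
  syz n.+1 m c f -> forall k, syz n m c (fun i => (f i)`_k).
Proof. by move=> mn H k; rewrite /syz -coef_syz // H coef0. Qed.

Lemma coefs_syz n m c (f : nat -> {poly mpoly K n}) : (m <= n)%N ->
  (forall k, syz n m c (fun i => (f i)`_k)) -> syz n.+1 m c f.
Proof. by move=> mn H; rewrite /syz; apply/polyP => k; rewrite coef_syz // H coef0. Qed.

Lemma claimA n (IH : forall m c f, (m <= n)%N -> syz n m c f -> spanP n m c f)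
  m c (f : nat -> {poly mpoly K n}) : (m <= n)%N -> syz n.+1 m c f -> spanP n.+1 m c f.
Proof.
move=> mn.
pose N := (\max_(i < m) size (f i))%N.
have : forall i, (i < m)%N -> (size (f i) <= N)%N.
  move=> i im; have := @leq_bigmax _ (fun j : 'I_m => size (f j)) (Ordinal im). done.
clearbody N; elim: N f => [|N IHN] f Hs Hsyz.
  apply: spX sp0 _ => i im; apply/esym/eqP; rewrite -size_poly_eq0.
  by rewrite -leqn0 Hs.
have H0 : spanP n.+1 m c (fun i => (((f i)`_0)%:P : {poly mpoly K n})).
  by apply: spanP_lift => //; apply: IH => //; apply: syz_coefs.
have H1 : spanP n.+1 m c (fun i => drop_poly 1 (f i)).
  apply: IHN => [i im|].
    by rewrite size_drop_poly leq_subLR add1n Hs.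
  apply: coefs_syz => // k; rewrite /syz.
  rewrite (eq_bigr (fun i : 'I_m => (f i)`_k.+1 * yv n c i)).
    by apply: syz_coefs.
  by move=> i _; rewrite coef_drop_poly addn1.
apply: spX (spD H0 (spZ ('X : mpoly K n.+1) H1)) _ => i im.
by rewrite -[f i in RHS](poly_take_drop 1) take1 expr1 mulrC.
Qed.


Arguments spanP_widen {n m m' c f}.
Arguments spanP_lift {n m c f}.
Arguments claimA {n} IH {m c f}.
Arguments spanP_syz {n m c f}.
Arguments spanP_sum {n m c k F}.

Theorem syz_span n : forall m c f, (m <= n)%N -> syz n m c f -> spanP n m c f.
Proof.
elim: n => [|n IH] m c f.
  rewrite leqn0 => /eqP -> _; by apply: spX sp0 _.
rewrite leq_eqVlt ltnS => /orP [/eqP ->|mn]; last exact: claimA.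
move: f; change (forall f : nat -> {poly mpoly K n}, syz n.+1 n.+1 c f -> spanP n.+1 n.+1 c f).
move=> f Hsyz.
have [cn0|cn0] := eqVneq (c n) 0.
  have Hs : syz n.+1 n c f.
    by move: Hsyz; rewrite /syz big_ord_recr /= yvSn cn0 mC0 polyC0 mul0r mulr0 addr0.
  have Hw := spanP_widen (leqnSn n) (claimA IH (leqnn n) Hs).
  have := spD Hw (spZ (f n : mpoly K n.+1) (spE n (ltnSn n) cn0)). move=> H; apply: spX H _ => i.
  rewrite ltnS leq_eqVlt => /orP [/eqP ->|lt].
    by rewrite ltnn eqxx mulr1 add0r.
  by rewrite lt (ltn_eqF lt) mulr0 addr0.
pose u : {poly mpoly K n} := (mC n (c n))%:P.
pose q j : {poly mpoly K n} := (mC n (c n)^-1)%:P * drop_poly 1 (f j).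
pose S := fun i => \sum_(j < n) ((q j : mpoly K n.+1) * gpv n.+1 c j n i).
have HS : spanP n.+1 n.+1 c S.
  apply: (@spanP_sum _ _ _ n (fun j i => (q j : mpoly K n.+1) * gpv n.+1 c j n i)) => j jn; apply: spZ; apply: spG => //; exact: ltnW.
pose g := fun i => f i - S i.
have Hg : syz n.+1 n.+1 c g.
  have := spanP_syz HS; move: Hsyz; rewrite /syz /g => H1 H2.
  rewrite (eq_bigr (fun i : 'I_n.+1 => f i * yv n.+1 c i - S i * yv n.+1 c i)).
    by rewrite sumrB H1 H2 subr0.
  by move=> i _; rewrite mulrBl.
have gi : forall i, (i < n)%N -> g i = ((f i)`_0)%:P.
  move=> i lt; rewrite /g /S.
  rewrite (eq_bigr (fun j : 'I_n => if i == j then (q j : mpoly K n.+1) * yv n.+1 c n else 0)).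
    rewrite (sum_if _ _ _ (fun j => (q j : mpoly K n.+1) * yv n.+1 c n)) //.
    rewrite yvSn /q. rewrite mulrA [_ * drop_poly _ _ * _]mulrC mulrA -polyCM -mCM mulfV // mC1 polyC1 mul1r.
    by rewrite -{1}(poly_take_drop 1 (f i)) take1 expr1 addrK.
  move=> j _; rewrite /gpv (ltn_eqF lt) subr0; by case: (i == j); rewrite ?mulr0.
have Hr : syz n n c (fun i => (f i)`_0).
  have := Hg; rewrite /syz big_ord_recr /= yvSn => /(congr1 (fun p : {poly mpoly K n} => p`_0)).
  rewrite coefD mulrA coefMX /= addr0 coef_sum coef0 => H; rewrite -[RHS]H.
  apply: eq_bigr => i _; rewrite gi // yvS // coefMC coefC //.
have gn : g n = 0.
  move: Hg; rewrite /syz big_ord_recr /=.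
  rewrite (eq_bigr (fun i : 'I_n => (((f i)`_0 * yv n c i)%:P : {poly mpoly K n}))); last first.
    by move=> i _; rewrite gi // yvS // polyCM.
  rewrite -rmorph_sum Hr rmorph0 add0r yvSn => /eqP.
  rewrite !mulf_eq0 polyC_eq0 mC_eq0 (negbTE cn0) polyX_eq0 !orbF => /eqP //.
have Hw := spanP_widen (leqnSn n) (spanP_lift (leqnn n) (IH n c _ (leqnn n) Hr)).
apply: spX (spD Hw HS) _ => i.
rewrite ltnS leq_eqVlt => /orP [/eqP ->|lt].
  by rewrite ltnn add0r -[S n]add0r -gn /g subrK.
by rewrite lt -gi // /g subrK.
Qed.

End Core.
Arguments yv {K}.
Arguments syz {K}.
Arguments gpv {K}.
Arguments spanP {K}.
Arguments syz_span {K}.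

Section Main.
Variables (K : fieldType) (l : nat) (a : 'I_l -> K).
Local Notation R := (mpoly K l).
Local Notation y i := (mC l (a i) * mX K l i).

Definition cext (i : nat) : K := if insub i is Some j then a j else 0.
Lemma cextE (j : 'I_l) : cext j = a j.
Proof. by rewrite /cext valK. Qed.
Lemma yvE (j : 'I_l) : yv l cext j = y j.
Proof. by rewrite /yv cextE. Qed.

Definition V (c1 : 'I_l -> R) (c2 : 'I_l -> 'I_l -> R) : 'rV[R]_l :=
  \sum_(r < l | a r == 0) c1 r *: e_std K r
  + \sum_(s < l) \sum_(t < l | a t * a s != 0) c2 s t *: g_pair a s t.

Definition Ex (f : nat -> R) := exists c1 c2, forall j : 'I_l, f j = V c1 c2 0 j.

Lemma eqord (i j : 'I_l) : (nat_of_ord i == nat_of_ord j) = (i == j).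
Proof. by []. Qed.

Lemma e_stdE (r j : 'I_l) : e_std K r 0 j = (j == r)%:R.
Proof. by rewrite /e_std mxE eqxx. Qed.
Lemma g_pairE (s t j : 'I_l) : g_pair a s t 0 j = y t * (j == s)%:R - y s * (j == t)%:R.
Proof. by rewrite /g_pair !mxE eqxx. Qed.

Lemma Ex0 : Ex (fun _ => 0).
Proof.
exists (fun _ => 0), (fun _ _ => 0) => j.
rewrite /V big1 ?add0r ?big1 ?mxE // => s _; first by rewrite big1 // => t _; rewrite scale0r.
by rewrite scale0r.
Qed.

Lemma ExD f g : Ex f -> Ex g -> Ex (fun i => f i + g i).
Proof.
move=> [c1 [c2 Hf]] [d1 [d2 Hg]].
exists (fun r => c1 r + d1 r), (fun s t => c2 s t + d2 s t) => j.
suff -> : V (fun r => c1 r + d1 r) (fun s t => c2 s t + d2 s t) = V c1 c2 + V d1 d2.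
  by rewrite Hf Hg [in RHS]mxE.
rewrite /V addrACA; congr (_ + _).
  by rewrite -big_split; apply: eq_bigr => r _; rewrite scalerDl.
rewrite -big_split; apply: eq_bigr => s _.
by rewrite -big_split; apply: eq_bigr => t _; rewrite scalerDl.
Qed.

Lemma ExZ h f : Ex f -> Ex (fun i => h * f i).
Proof.
move=> [c1 [c2 Hf]].
exists (fun r => h * c1 r), (fun s t => h * c2 s t) => j.
suff -> : V (fun r => h * c1 r) (fun s t => h * c2 s t) = h *: V c1 c2.
  by rewrite Hf [in RHS]mxE.
rewrite /V scalerDr !scaler_sumr; congr (_ + _).
  by apply: eq_bigr => r _; rewrite scalerA.
apply: eq_bigr => s _; rewrite scaler_sumr.
by apply: eq_bigr => t _; rewrite scalerA.
Qed.

Lemma ExX (f g : nat -> R) : Ex f -> (forall j : 'I_l, f j = g j) -> Ex g.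
Proof. by move=> [c1 [c2 Hf]] fg; exists c1, c2 => j; rewrite -fg. Qed.

Lemma ExE (r0 : 'I_l) : a r0 = 0 -> Ex (fun i => if i == r0 then 1 else 0).
Proof.
move=> ar.
exists (fun r => if r == r0 then 1 else 0), (fun _ _ => 0) => j.
rewrite /V [X in _ + X]big1; last by move=> s _; rewrite big1 // => t _; rewrite scale0r.
rewrite addr0 (bigD1 r0) /=; last by rewrite ar.
rewrite eqxx scale1r big1 ?addr0; last by move=> r /andP [_ /negbTE ->]; rewrite scale0r.
by rewrite e_stdE -[(j == r0)%:R]/((nat_of_ord j == nat_of_ord r0)%:R); case: (_ == _).
Qed.

Lemma ExG (s0 t0 : 'I_l) : a t0 * a s0 != 0 -> Ex (gpv l cext s0 t0).
Proof.
move=> ast.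
exists (fun _ => 0), (fun s t => if s == s0 then (if t == t0 then 1 else 0) else 0) => j.
rewrite /V big1 ?add0r; last by move=> r _; rewrite scale0r.
rewrite (bigD1 s0) //= (bigD1 t0) //= !eqxx scale1r.
rewrite big1 ?addr0; last by move=> t /andP [_ /negbTE ->]; rewrite scale0r.
rewrite big1 ?addr0; last first.
  by move=> s /negbTE ->; rewrite big1 // => t _; rewrite scale0r.
rewrite g_pairE /gpv !yvE.
rewrite !eqord; by case: (j == s0); case: (j == t0); rewrite ?mulr0 ?mulr1 ?subr0 ?sub0r.
Qed.

Arguments ExX {f g}.
Arguments ExE {r0}.
Arguments ExD {f g}.
Arguments ExZ h {f}.
Lemma span_Ex f : spanP l l cext f -> Ex f.
Proof.
elim => {f}.
- exact: Ex0.
- by move=> f g _ Hf _ Hg; apply: ExD.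
- by move=> h f _ Hf; apply: ExZ.
- move=> r rl cr.
  have ar : a (Ordinal rl) = 0 by rewrite -cextE.
  by apply: ExX (ExE ar) _.
- move=> s t sl tl.
  pose s0 := Ordinal sl; pose t0 := Ordinal tl.
  have [ast|] := boolP (a t0 * a s0 != 0); first exact: ExG ast.
  rewrite negbK mulf_eq0 => /orP [/eqP at0|/eqP as0].
    apply: (ExX (ExZ (- yv l cext s) (ExE at0))) => j.
    rewrite /gpv /yv (_ : cext t = 0); last by rewrite -at0 -cextE.
    rewrite -[s]/(nat_of_ord s0) -[t]/(nat_of_ord t0) !eqord.
    rewrite mC0 !mul0r; case: (j == s0); case: (j == t0); rewrite ?mulr0 ?mulr1 ?sub0r ?subr0 ?oppr0 //.
  apply: (ExX (ExZ (yv l cext t) (ExE as0))) => j.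
  rewrite /gpv /yv (_ : cext s = 0); last by rewrite -as0 -cextE.
  rewrite -[s]/(nat_of_ord s0) -[t]/(nat_of_ord t0) !eqord.
  rewrite mC0 !mul0r; case: (j == t0); case: (j == s0); rewrite ?mulr0 ?mulr1 ?subr0 ?sub0r ?oppr0 //.
- by move=> f g _ Hf fg; apply: ExX Hf _ => j; apply: fg.
Qed.

End Main.

Arguments cext {K l}.
Arguments yvE {K l}.
Arguments span_Ex {K l a f}.
Arguments e_stdE {K l}.

Section Final.
Variables (K : fieldType) (l : nat) (a : 'I_l -> K).
Local Notation R := (mpoly K l).

Definition L (v : 'rV[R]_l) : R := \sum_(i < l) v 0 i * (mC l (a i) * mX K l i).

Lemma LD : {morph L : x y / x + y >-> x + y}.
Proof. by move=> x y; rewrite /L -big_split; apply: eq_bigr => i _; rewrite mxE mulrDl. Qed.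
Lemma L0 : L 0 = 0.
Proof. by rewrite /L big1 // => i _; rewrite mxE mul0r. Qed.
Lemma LZ h v : L (h *: v) = h * L v.
Proof. rewrite /L mulr_sumr; apply: eq_bigr => i _; rewrite mxE. by rewrite -mulrA. Qed.
Lemma Le r : L (e_std K r) = mC l (a r) * mX K l r.
Proof.
rewrite /L (bigD1 r) //= e_stdE eqxx mul1r big1 ?addr0 // => i /negbTE ir.
by rewrite e_stdE ir mul0r.
Qed.
Lemma Lg s t : L (g_pair a s t) = 0.
Proof.
rewrite /g_pair -[_ - _]/((_ *: _) + (- (_ *: _))) LD -scaleNr !LZ !Le.
by rewrite mulNr mulrC subrr.
Qed.
Lemma Lsum (I : Type) (r : seq I) (P : pred I) (F : I -> 'rV[R]_l) :
  L (\sum_(i <- r | P i) F i) = \sum_(i <- r | P i) L (F i).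
Proof. exact: (big_morph L LD L0). Qed.
End Final.
Arguments L {K l}.
Arguments LD {K l a}.
Arguments LZ {K l a}.
Arguments Lsum {K l a}.
Arguments Le {K l a}.
Arguments Lg {K l a}.

Theorem lemma2p4 (K : fieldType) (l : nat) (a : 'I_l -> K)
  (ha : exists i, a i != 0) :
  forall k : 'rV[mpoly K l]_l, in_Mj a k <-> in_span_Gj a k.
Proof.
move=> k; split.
  move=> [kj Hk].
  pose f := fun i : nat => if insub i is Some j then k 0 j - kj else 0.
  have Hs : syz l l (cext a) f.
    rewrite /syz (eq_bigr (fun i : 'I_l => (k 0 i - kj) * (mC l (a i) * mX K l i))).
      rewrite (eq_bigr (fun i : 'I_l => k 0 i * (mC l (a i) * mX K l i) - kj * (mC l (a i) * mX K l i))).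
        by rewrite sumrB -Hk -mulr_sumr subrr.
      by move=> i _; rewrite mulrBl.
    by move=> i _; rewrite /f valK yvE.
  have [c1 [c2 Hc]] := span_Ex (syz_span l l (cext a) f (leqnn l) Hs).
  exists kj, c1, c2; apply/matrixP => i j.
  rewrite (ord1 i) -addrA mxE [in RHS]mxE -Hc /f valK /e_all mxE.
  by rewrite mulr1 addrC subrK.
move=> [c0 [c1 [c2 ->]]]; exists c0.
rewrite -/(L a _) !LD !LZ !Lsum big1 ?addr0; last first.
  by move=> r /eqP ar; rewrite LZ Le ar mC0 !mul0r mulr0.
rewrite big1 ?addr0; last by move=> s _; rewrite Lsum big1 // => t _; rewrite LZ Lg mulr0.
congr (_ * _); by rewrite /L /lin_form; apply: eq_bigr => i _; rewrite /e_all mxE mul1r.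
Qed.
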